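(* Let $k\ge3$ and $l\ge1$ be integers, and $G_{k,l}(T):=1-T+T^{lk+1}-T^{k(l+1)}$. If $\alpha\in\mathbb{C}$ satisfies $|\alpha|=1$ and $G_{k,l}(\alpha)=0$, then $\alpha^k=1$ or $\alpha^{k-2}=1$. *)

(* Defs.v *)
From mathcomp Require Import all_boot all_order all_algebra.
From mathcomp Require Import complex.
From mathcomp Require Import Rstruct.
Set Implicit Arguments. Unset Strict Implicit. Unset Printing Implicit Defensive.
Import Order.TTheory GRing.Theory Num.Theory.
Local Open Scope ring_scope.

Notation Cplx := (complex.complex Rdefinitions.R).

Definition G (k l : nat) : {poly Cplx} :=
  1 - 'X + 'X^(l * k + 1) - 'X^(k * (l + 1)).

(* Main.v *)
Require Import Defs.
From mathcomp Require Import all_boot all_order all_algebra.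
From mathcomp Require Import complex Rstruct.
From mathcomp Require Import ring.
Import Order.TTheory GRing.Theory Num.Theory.
Local Open Scope ring_scope.

Lemma aux1 (F : fieldType) (a x p : F) : a != 0 -> x != 0 -> p != 0 ->
  x * p * a ^+ 2 - x * p * a + p * a - 1 =
  (x * p * a ^+ 2) * (1 - a^-1 + x^-1 / a - x^-1 * (p^-1 / a ^+ 2)).
Proof. move=> a0 x0 p0; field; by apply/and3P. Qed.

Lemma aux2 (F : comNzRingType) (a x p : F) :
  (1 - p) * (1 - p * a ^+ 2) =
    p * (a - 1) * (1 - a + x * a - x * p * a ^+ 2)
    - (1 - p * a) * (x * p * a ^+ 2 - x * p * a + p * a - 1).
Proof. ring. Qed.

Theorem lemma14 (k l : nat) (hk : (3 <= k)%N) (hl : (1 <= l)%N)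
  (alpha : Cplx) (habs : `|alpha| = 1) (hroot : (G k l).[alpha] = 0) :
  alpha ^+ k = 1 \/ alpha ^+ (k - 2) = 1.
Proof.
set a := alpha.
have a0 : a != 0 by rewrite -normr_eq0 habs oner_eq0.
have hb : a^* = a^-1 by rewrite invC_norm habs expr1n invr1 mul1r.
have ek : k = ((k - 2) + 2)%N by rewrite subnK // (leq_trans _ hk).
set j := (k - 2)%N.
set n := (l * k)%N.
have hG : 1 - a + a ^+ (n + 1) - a ^+ (n + k) = 0.
  have ekl : (k * (l + 1) = n + k)%N by rewrite /n mulnDr muln1 mulnC.
  by move: hroot; rewrite /G !hornerE -ekl.
have hC := congr1 Num.conj hG.
rewrite !(rmorphB, rmorphD, rmorph1, rmorphXn, rmorph0) /= hb in hC.
set x := a ^+ n; set p := a ^+ j.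
have x0 : x != 0 by rewrite expf_neq0.
have p0 : p != 0 by rewrite expf_neq0.
have e1 : 1 - a + x * a - x * p * a ^+ 2 = 0.
  have hk2 : a ^+ k = p * a ^+ 2 by rewrite {1}ek exprD.
  by rewrite -hG exprD expr1 [in RHS]exprD hk2 mulrA.
have e2 : x * p * a ^+ 2 - x * p * a + p * a - 1 = 0.
  have -> : x * p * a ^+ 2 - x * p * a + p * a - 1 =
     (x * p * a ^+ 2) * (1 - a^-1 + a^-1 ^+ (n + 1) - a^-1 ^+ (n + k)).
    have hk2 : a^-1 ^+ k = p^-1 * a^-1 ^+ 2 by rewrite {1}ek exprD exprVn.
    rewrite !exprD hk2 !exprVn -/x expr1. by rewrite [LHS](@aux1 _ a x p a0 x0 p0).
  by rewrite hC mulr0.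
have key : (1 - p) * (1 - p * a ^+ 2) = 0.
  have -> : (1 - p) * (1 - p * a ^+ 2) =
    p * (a - 1) * (1 - a + x * a - x * p * a ^+ 2)
    - (1 - p * a) * (x * p * a ^+ 2 - x * p * a + p * a - 1) by apply: aux2.
  by rewrite e1 e2 !mulr0 subr0.
move/eqP: key; rewrite mulf_eq0 !subr_eq0 => /orP [/eqP h|/eqP h].
  by right; rewrite -h.
by left; rewrite ek exprD -/j -h.
Qed.
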